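(* Let $n\ge 5$ and let $x,y$ be adjacent vertices of $Q_n$ with $f_n(x)+f_n(y)=\operatorname{str}_{f_n}(Q_n)$. If $x$ and $y$ both begin with the bit $0$, then $$\operatorname{str}_{f_n}(Q_n)\le \operatorname{str}_{f_{n-2}}(Q_{n-2})+3\cdot 2^{n-2}+\binom{n-3}{\lceil (n-3)/2\rceil}+\binom{n-2}{\lceil (n-2)/2\rceil}.$$
   Context: $Q_n$ is the $n$-dimensional hypercube: vertices are the $n$-bit strings, adjacent iff they differ in exactly one position. For a bijection $f:V(G)\to\{1,\dots,|V(G)|\}$, $\operatorname{str}_f(G)=\max\{f(u)+f(v):uv\in E(G)\}$. An $n$-bit string is $x_1\cdots x_n$, $x_i\in\{0,1\}$; its weight is its number of $1$s. Lexicographic order: $x<y$ if for some $k$, $x_j=y_j$ for $j<k$ and $x_k<y_k$. $S_n^i$ is the sequence of $n$-bit strings of weight $i$ in increasing lexicographic order; $R_n^i$ is the same set in decreasing lexicographic order. $S_n$ is the concatenation $(R_n^1,R_n^3,\dots,R_n^{n-1},S_n^n,S_n^{n-2},\dots,S_n^2,S_n^0)$ for even $n$ and $(R_n^1,R_n^3,\dots,R_n^{n-2},R_n^n,S_n^{n-1},\dots,S_n^2,S_n^0)$ for odd $n$; $f_n$ maps the string in position $j$ of $S_n$ to $j$. *)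

(* Defs.v *)
(* n-bit strings are represented as seq bool of size n,
   with false = 0, true = 1. *)
From mathcomp Require Import all_boot.
Set Implicit Arguments. Unset Strict Implicit. Unset Printing Implicit Defensive.

Fixpoint allbits (n : nat) : seq (seq bool) :=
  if n is n'.+1 then
    [seq b :: s | b <- [:: false; true], s <- allbits n']
  else [:: [::]].

Definition weight (s : seq bool) : nat := count id s.

Definition Sw (n i : nat) : seq (seq bool) :=
  [seq s <- allbits n | weight s == i].
Definition Rw (n i : nat) : seq (seq bool) := rev (Sw n i).

(* For even n the middle block S_n^n and for odd n the block R_n^n are
   single strings, so this uniform description agrees with both cases. *)
Definition Sseq (n : nat) : seq (seq bool) :=
  flatten [seq Rw n i | i <- iota 0 n.+1 & odd i] ++
  flatten [seq Sw n i | i <- rev (iota 0 n.+1) & ~~ odd i].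

Definition fn (n : nat) (x : seq bool) : nat := (index x (Sseq n)).+1.

Definition hadj (x y : seq bool) : bool :=
  (size x == size y) && (count id [seq p.1 != p.2 | p <- zip x y] == 1).

Definition strQ (n : nat) : nat :=
  \max_(u <- allbits n) \max_(v <- allbits n | hadj u v) (fn n u + fn n v).

(* Main.v *)
Require Import Defs.
From mathcomp Require Import all_boot zify_ssreflect.
Set Implicit Arguments. Unset Strict Implicit. Unset Printing Implicit Defensive.

Lemma allbitsS n : allbits n.+1 =
  map (cons false) (allbits n) ++ map (cons true) (allbits n).
Proof. by rewrite /= cats0. Qed.

Lemma cons_inj b : injective (cons b : seq bool -> seq bool).
Proof. by move=> s t []. Qed.

Lemma mem_allbits n s : (s \in allbits n) = (size s == n).
Proof.
elim: n s => [|n IH] s; first by case: s.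
rewrite allbitsS mem_cat; case: s => [|[] s] /=.
- by apply/negbTE/norP; split; apply/negP => /mapP [].
- rewrite (mem_map (@cons_inj true)) IH; have /negbTE -> // : true :: s \notin map (cons false) (allbits n) by apply/negP => /mapP [].
- rewrite (mem_map (@cons_inj false)) IH; have /negbTE -> : false :: s \notin map (cons true) (allbits n) by apply/negP => /mapP [].
  by rewrite orbF.
Qed.

Lemma uniq_allbits n : uniq (allbits n).
Proof.
elim: n => [|n IH] //; rewrite allbitsS cat_uniq !map_inj_uniq ?IH //=;
  try exact: cons_inj.
by rewrite andbT; apply/hasPn => s /mapP [t _ ->]; apply/negP => /mapP [].
Qed.

Lemma size_allbits n : size (allbits n) = 2 ^ n.
Proof. by elim: n => // n IH; rewrite allbitsS size_cat !size_map IH expnS mul2n addnn. Qed.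

Fixpoint ltlex (s t : seq bool) : bool :=
  match s, t with
  | b :: s', c :: t' => (~~ b && c) || ((b == c) && ltlex s' t')
  | _, _ => false
  end.

Lemma ltlex_irr s : ltlex s s = false.
Proof. by elim: s => //= b s ->; rewrite andbF; case: b. Qed.

Lemma ltlex_asym s t : ltlex s t -> ltlex t s = false.
Proof.
elim: s t => [|b s IH] [|c t] //=.
by case: b; case: c => //=; apply: IH.
Qed.

Lemma ltlex_tri s t : size s = size t -> ltlex s t + ltlex t s + (s == t) = 1.
Proof.
elim: s t => [|b s IH] [|c t] //= [] /IH.
by case: b; case: c => //=; rewrite eqseq_cons.
Qed.

Lemma pairwise_allbits n : pairwise ltlex (allbits n).
Proof.
elim: n => // n IH; rewrite allbitsS pairwise_cat !pairwise_map.
apply/and3P; split.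
- by apply/allrelP => s t /mapP [s' _ ->] /mapP [t' _ ->].
- by apply: sub_pairwise IH => s t /= ->.
- by apply: sub_pairwise IH => s t /= ->.
Qed.


Definition bl (k w : nat) : bool :=
  if odd w then odd k && (k < w) else odd k || (w < k).

Definition ltS (t x : seq bool) : bool :=
  bl (weight t) (weight x) ||
  ((weight t == weight x) && (if odd (weight x) then ltlex x t else ltlex t x)).

Definition pos n x := (count (ltS^~ x) (allbits n)).+1.

Lemma bl_irr k : bl k k = false.
Proof. rewrite /bl; case: (odd k) => /=; lia. Qed.

Lemma bl_asym a b : bl a b -> bl b a = false.
Proof. rewrite /bl; case: (odd a); case: (odd b) => /=; lia. Qed.

Lemma ltS_irr : irreflexive ltS.
Proof. by move=> t; rewrite /ltS bl_irr eqxx ltlex_irr; case: ifP. Qed.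

Lemma ltS_asym t x : ltS t x -> ltS x t = false.
Proof.
rewrite /ltS; case/orP => [H|/andP [/eqP E H]].
  rewrite (bl_asym H) /=; apply/negbTE; apply/negP => /andP [/eqP E].
  by move: H; rewrite E bl_irr.
rewrite E bl_irr /= eqxx /=; move: H; rewrite -E.
by case: ifP => _ /ltlex_asym.
Qed.

Lemma index_pairwise (T : eqType) (r : rel T) s x :
  irreflexive r -> (forall a b, r a b -> r b a = false) ->
  pairwise r s -> x \in s -> index x s = count (r^~ x) s.
Proof.
move=> irr asym; elim: s => // h s IH /= /andP [Hh Hs].
rewrite inE eq_sym; case: eqVneq => [<-|ne] /=.
  move=> _; rewrite irr /=; apply/esym/eqP; rewrite -leqn0 leqNgt -has_count; apply/hasPn => y ys.
  by rewrite asym //; apply: (allP Hh).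
move=> xs; by rewrite (IH Hs xs) (allP Hh x xs).
Qed.

Lemma pairwise_flatten_map (I T : eqType) (r : rel T) (R : rel I) (F : I -> seq T) l :
  pairwise R l -> {in l, forall i, pairwise r (F i)} ->
  {in l &, forall i j, R i j -> allrel r (F i) (F j)} ->
  pairwise r (flatten (map F l)).
Proof.
elim: l => // i l IH /= /andP [Ri Rl] Hp Ha.
rewrite pairwise_cat; apply/and3P; split.
- apply/allrelP => a b ai /flatten_mapP [j jl bj].
  have := Ha i j (mem_head _ _) (@mem_behead _ (i :: l) j jl) (allP Ri j jl).
  by move/allrelP; apply.
- by apply: Hp; rewrite mem_head.
- apply: IH => //.
  + by move=> j jl; apply: Hp; rewrite inE jl orbT.
  + by move=> j k jl kl; apply: Ha; rewrite inE ?jl ?kl orbT.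
Qed.

Lemma pairwise_rev (T : Type) (r : rel T) s :
  pairwise r (rev s) = pairwise (fun a b => r b a) s.
Proof.
elim: s => // a s IH; rewrite rev_cons pairwise_rcons IH /= all_rev; congr andb.
Qed.

Lemma mem_Sw n i t : (t \in Sw n i) = (size t == n) && (weight t == i).
Proof. by rewrite /Sw mem_filter mem_allbits andbC. Qed.

Lemma pairwise_Sw n i : ~~ odd i -> pairwise ltS (Sw n i).
Proof.
move=> oi; apply: (@sub_in_pairwise _ (fun t => weight t == i) ltlex).
- move=> a b /eqP wa /eqP wb H; rewrite /ltS wa wb eqxx (negbTE oi) H.
  by rewrite orbT.
- by apply/allP => t; rewrite mem_Sw => /andP [].
- exact/pairwise_filter/pairwise_allbits.
Qed.

Lemma pairwise_Rw n i : odd i -> pairwise ltS (Rw n i).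
Proof.
move=> oi; rewrite /Rw pairwise_rev.
apply: (@sub_in_pairwise _ (fun t => weight t == i) ltlex).
- move=> a b /eqP wa /eqP wb H; rewrite /ltS wa wb eqxx oi H.
  by rewrite orbT.
- by apply/allP => t; rewrite mem_Sw => /andP [].
- exact/pairwise_filter/pairwise_allbits.
Qed.

Lemma pairwise_Sseq n : pairwise ltS (Sseq n).
Proof.
rewrite /Sseq pairwise_cat; apply/and3P; split.
- apply/allrelP => a b /flatten_mapP [i ii ai] /flatten_mapP [j jj bj].
  move: ai bj; rewrite mem_rev !mem_Sw => /andP [_ /eqP wa] /andP [_ /eqP wb].
  move: ii jj; rewrite !mem_filter => /andP [oi _] /andP [oj _].
  by rewrite /ltS wa wb /bl (negbTE oj) oi.
- apply: (@pairwise_flatten_map _ _ _ ltn).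
  + by apply: pairwise_filter; rewrite -(sorted_pairwise ltn_trans) iota_ltn_sorted.
  + by move=> i; rewrite mem_filter => /andP [oi _]; apply: pairwise_Rw.
  + move=> i j; rewrite !mem_filter => /andP [oi _] /andP [oj _] ij.
    apply/allrelP => a b; rewrite !mem_rev !mem_Sw => /andP [_ /eqP wa] /andP [_ /eqP wb].
    have ij' : i < j := ij; by rewrite /ltS wa wb /bl oj oi ij'.
- apply: (@pairwise_flatten_map _ _ _ (fun i j => j < i)).
  + apply: pairwise_filter; rewrite pairwise_rev.
    by rewrite -(sorted_pairwise ltn_trans) iota_ltn_sorted.
  + by move=> i; rewrite mem_filter => /andP [oi _]; apply: pairwise_Sw.
  + move=> i j; rewrite !mem_filter => /andP [oi _] /andP [oj _] ij.
    apply/allrelP => a b; rewrite !mem_Sw => /andP [_ /eqP wa] /andP [_ /eqP wb].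
    by rewrite /ltS wa wb /bl (negbTE oj) ij orbT.
Qed.

Lemma weight_size t : weight t <= size t.
Proof. exact: count_size. Qed.

Lemma mem_Sseq n t : (t \in Sseq n) = (t \in allbits n).
Proof.
rewrite mem_allbits /Sseq mem_cat; apply/idP/idP.
  by case/orP => /flatten_mapP [i _]; rewrite ?mem_rev mem_Sw => /andP [].
move=> /eqP st; have wl := weight_size t; rewrite st in wl.
case oi: (odd (weight t)); [apply/orP; left | apply/orP; right];
  apply/flatten_mapP; exists (weight t).
- rewrite mem_filter mem_iota oi /=; lia.
- by rewrite mem_rev mem_Sw st !eqxx.
- rewrite mem_filter mem_rev mem_iota oi /=; lia.
- by rewrite mem_Sw st !eqxx.
Qed.

Lemma fn_pos n x : x \in allbits n -> fn n x = pos n x.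
Proof.
move=> xa; rewrite /fn /pos (index_pairwise ltS_irr ltS_asym (pairwise_Sseq n));
  last by rewrite mem_Sseq.
have P : perm_eq (Sseq n) (allbits n).
  apply: uniq_perm; first exact: pairwise_uniq ltS_irr (pairwise_Sseq n).
    exact: uniq_allbits.
  exact: mem_Sseq.
by move/permP: P => ->.
Qed.


Definition wsum m (g : nat -> nat) := \sum_(s <- allbits m) g (weight s).

Lemma weight0 t : weight (false :: t) = weight t. Proof. by []. Qed.
Lemma weight1 t : weight (true :: t) = (weight t).+1. Proof. by []. Qed.

Lemma wsumS m g : wsum m.+1 g = wsum m g + wsum m (fun k => g k.+1).
Proof. by rewrite /wsum allbitsS big_cat !big_map. Qed.

Lemma wsumD m g h : wsum m (fun k => g k + h k) = wsum m g + wsum m h.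
Proof. by rewrite /wsum big_split. Qed.

Lemma wsum_const m c : wsum m (fun _ => c) = c * 2 ^ m.
Proof.
elim: m => [|m IH]; first by rewrite /wsum big_cons big_nil muln1 addn0.
by rewrite wsumS IH expnS mulnCA mul2n -addnn.
Qed.

Lemma wsum_le m g h : (forall k, g k <= h k) -> wsum m g <= wsum m h.
Proof. by move=> H; rewrite /wsum; apply: leq_sum => s _. Qed.

Lemma count_sum (T : Type) (p : pred T) s : count p s = \sum_(t <- s) p t.
Proof. by elim: s => [|a s IH]; rewrite ?big_nil ?big_cons //= IH. Qed.

Lemma wsum_count m (P : pred nat) :
  count (fun t => P (weight t)) (allbits m) = wsum m (fun k => P k).
Proof. by rewrite count_sum. Qed.

Lemma wsum_bin m j : wsum m (fun k => k == j) = 'C(m, j).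
Proof.
elim: m j => [|m IH] j.
  by rewrite /wsum big_cons big_nil addn0 bin0n eq_sym.
rewrite wsumS; case: j => [|j].
  have -> : wsum m (fun k => k.+1 == 0) = 0 by rewrite /wsum big1_seq.
  by rewrite IH !bin0.
have -> : wsum m (fun k => k.+1 == j.+1) = wsum m (fun k => k == j) by [].
by rewrite !IH binS.
Qed.

Definition Ap w k : bool := bl k.+1 w || ((k.+1 == w) && odd w).
Definition Bp w k : nat :=
  (bl k w.+1 || ((k == w.+1) && odd w)) + (k == w) + bl k.+1 w.+1 + bl k w.

Lemma pos0 m s : pos m.+1 (false :: s) = pos m s + wsum m (Ap (weight s)).
Proof.
rewrite /pos allbitsS count_cat !count_map addSn; congr S; congr addn.
rewrite -wsum_count; apply: eq_count => t /=.
rewrite /ltS /Ap weight1 weight0 /=; by case: (odd _).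
Qed.

Lemma pw1 s t : size t = size s ->
  ltS (true :: t) (true :: s) + ltS t s + (t == s) =
  (weight t == weight s) + bl (weight t).+1 (weight s).+1 + bl (weight t) (weight s).
Proof.
move=> st; rewrite /ltS !weight1 eqSS.
case: eqVneq => [E|ne].
  rewrite E !bl_irr /= -(ltlex_tri st) /=; case: (odd _) => /=; lia.
have -> : (t == s) = false by apply/negbTE; apply: contra_neq ne => ->.
by rewrite !andFb !orbF addn0 add0n.
Qed.

Lemma pos1 m s : s \in allbits m ->
  pos m.+1 (true :: s) + pos m s = 1 + wsum m (Bp (weight s)).
Proof.
move=> sa; rewrite /pos allbitsS count_cat !count_map.
have C1 : count (pred1 s) (allbits m) = 1 by rewrite count_uniq_mem ?uniq_allbits ?sa.
have E0 : count (preim (cons false) (ltS^~ (true :: s))) (allbits m) =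
  wsum m (fun k => bl k (weight s).+1 || ((k == (weight s).+1) && odd (weight s))).
  rewrite -wsum_count; apply: eq_count => t /=.
  by rewrite /ltS weight1 weight0 /=; case: (odd _).
have E1 : count (preim (cons true) (ltS^~ (true :: s))) (allbits m) +
          count (ltS^~ s) (allbits m) + count (pred1 s) (allbits m) =
  wsum m (fun k => (k == weight s) + bl k.+1 (weight s).+1 + bl k (weight s)).
  rewrite !count_sum -!big_split /wsum big_seq_cond [RHS]big_seq_cond.
  apply: eq_bigr => t /andP [ta _] /=; apply: pw1.
  by move: ta sa; rewrite !mem_allbits => /eqP -> /eqP ->.
rewrite C1 in E1.
have -> : wsum m (Bp (weight s)) =
  wsum m (fun k => bl k (weight s).+1 || ((k == (weight s).+1) && odd (weight s))) +
  wsum m (fun k => (k == weight s) + bl k.+1 (weight s).+1 + bl k (weight s)).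
  by rewrite -wsumD /Bp; apply: eq_bigr => t _; rewrite !addnA.
rewrite -E0 -E1; lia.
Qed.


Definition phi (x : seq bool) : seq bool :=
  match x with _ :: a :: b :: t => (a (+) b) :: t | _ => [::] end.

Definition AddT m (a : bool) w :=
  if a then 1 + wsum m (Bp w) + wsum m.+1 (Ap w.+1)
  else wsum m (Ap w) + wsum m.+1 (Ap w).

Definition SubT m' (a b : bool) w :=
  if a then 1 + wsum m' (Ap (w - b)) + wsum m' (Bp (w - b)) else 0.

Lemma decomp m' (a b : bool) z : z \in allbits m' ->
  pos m'.+3 [:: false, a, b & z] + SubT m' a b (weight (b :: z)) =
  AddT m'.+1 a (weight (b :: z)) + pos m'.+1 (phi [:: false, a, b & z]).
Proof.
move=> za.
have bza : b :: z \in allbits m'.+1 by move: za; rewrite !mem_allbits.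
case: a; rewrite /SubT /AddT /phi /=.
- rewrite pos0 weight1.
  have H1 := pos1 bza.
  case: b bza H1 => bza H1 /=.
  + have H2 := pos1 za; have H3 := pos0 m' z.
    rewrite weight1 ?add1n ?add0n ?subn0 subn1 /= in H1 *; lia.
  + have H2 := pos1 za; have H3 := pos0 m' z.
    rewrite weight0 ?add1n ?add0n ?subn0 in H1 *; lia.
- rewrite pos0 weight0 pos0 /=; lia.
Qed.


Definition AddP (a : bool) w i : nat :=
  if a then Bp w i + Bp w i.+1 + (Ap w.+1 i + 2 * Ap w.+1 i.+1 + Ap w.+1 i.+2)
  else (Ap w i + Ap w i.+1) + (Ap w i + 2 * Ap w i.+1 + Ap w i.+2).

Definition SubP (a : bool) k i : nat := if a then Ap k i + Bp k i else 0.

Definition Eb (w w' : nat) := if odd w then w' else w.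

Definition RHSP (a a' : bool) (w w' : nat) i : nat :=
  6 + (i.+1 == Eb w w') + (i == Eb w w') + (i == if a && a' then (Eb w w').-1 else Eb w w').

Ltac crunch := rewrite /AddP /SubP /RHSP /Eb /Ap /Bp /bl /=;
  rewrite ?addSn ?addnS ?add0n ?add1n ?oddS ?negbK /=;
  case: (odd _); case: (odd _) => /=; lia.

Lemma pw_T1 (a b : bool) k i :
  AddP a (b + k) i + AddP (~~ a) (b + k) i <=
  SubP a k i + SubP (~~ a) k i + RHSP a (~~ a) (b + k) (b + k) i.
Proof.
have Hk := odd_double_half k; have Hi := odd_double_half i.
move: (k./2) (i./2) Hk Hi => q p Hk Hi.
case: a; case: b; rewrite /AddP /SubP /RHSP /Eb /Ap /Bp /bl /=; rewrite ?addSn ?addnS ?add0n ?add1n ?oddS ?negbK /=.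
all: case: (odd k) Hk; case: (odd i) Hi => Hi Hk /=; rewrite ?andbF ?andbT ?orbF ?orbT; lia. Qed.

Lemma pw_T2 (a b : bool) k i :
  AddP a (b + k) i + AddP a (~~ b + k) i <=
  SubP a k i + SubP a k i + RHSP a a (b + k) (~~ b + k) i.
Proof.
have Hk := odd_double_half k; have Hi := odd_double_half i.
move: (k./2) (i./2) Hk Hi => q p Hk Hi.
case: a; case: b; rewrite /AddP /SubP /RHSP /Eb /Ap /Bp /bl /=;
  rewrite ?addSn ?addnS ?add0n ?add1n ?oddS ?negbK /=.
all: case: (odd k) Hk; case: (odd i) Hi => Hi Hk /=; rewrite ?andbF ?andbT ?orbF ?orbT; lia.
Qed.

Lemma pw_T3 (a b : bool) k i :
  AddP a (b + k) i + AddP a (b + k.+1) i <=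
  SubP a k i + SubP a k.+1 i + RHSP a a (b + k) (b + k.+1) i.
Proof.
have Hk := odd_double_half k; have Hi := odd_double_half i.
move: (k./2) (i./2) Hk Hi => q p Hk Hi.
case: a; case: b; rewrite /AddP /SubP /RHSP /Eb /Ap /Bp /bl /=;
  rewrite ?addSn ?addnS ?add0n ?add1n ?oddS ?negbK /=.
all: case: (odd k) Hk; case: (odd i) Hi => Hi Hk /=; rewrite ?andbF ?andbT ?orbF ?orbT; lia.
Qed.

Lemma pw_T3' (a b : bool) k i :
  AddP a (b + k.+1) i + AddP a (b + k) i <=
  SubP a k.+1 i + SubP a k i + RHSP a a (b + k.+1) (b + k) i.
Proof.
have Hk := odd_double_half k; have Hi := odd_double_half i.
move: (k./2) (i./2) Hk Hi => q p Hk Hi.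
case: a; case: b; rewrite /AddP /SubP /RHSP /Eb /Ap /Bp /bl /=;
  rewrite ?addSn ?addnS ?add0n ?add1n ?oddS ?negbK /=.
all: case: (odd k) Hk; case: (odd i) Hi => Hi Hk /=; rewrite ?andbF ?andbT ?orbF ?orbT; lia.
Qed.


Lemma AddT_eq m' (a : bool) w : AddT m'.+1 a w = a + wsum m' (AddP a w).
Proof.
case: a; rewrite /AddT /AddP !wsumS /wsum.
- rewrite -!big_split /= -addnA -big_split; congr (1 + _).
  apply: eq_bigr => s _; rewrite [LHS]/= ; lia.
- rewrite -!big_split /= add0n; apply: eq_bigr => s _; lia.
Qed.

Lemma SubT_eq m' (a b : bool) k : SubT m' a b (b + k) = a + wsum m' (SubP a k).
Proof.
case: a; rewrite /SubT /SubP.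
- by rewrite addKn /wsum -addnA -big_split.
- by rewrite /wsum big1_seq.
Qed.


Lemma bin_step n j : j.+1 <= uphalf n -> 'C(n, j) <= 'C(n, j.+1).
Proof.
move=> H; rewrite -(leq_pmul2l (ltn0Sn j)) mul_bin_left.
apply: leq_mul => //; have := odd_double_half n; rewrite uphalf_half in H; lia.
Qed.

Lemma bin_central n k : 'C(n, k) <= 'C(n, uphalf n).
Proof.
have chain : forall d, d <= uphalf n -> 'C(n, uphalf n - d) <= 'C(n, uphalf n).
  elim=> [|d IH] Hd; first by rewrite subn0.
  apply: leq_trans (IH (ltnW Hd)).
  have -> : uphalf n - d = (uphalf n - d.+1).+1 by lia.
  apply: bin_step; lia.
have hu : uphalf n <= n by rewrite uphalf_half; have := odd_double_half n; lia.
case: (leqP k (uphalf n)) => Hk.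
  by have := chain (uphalf n - k) (leq_subr _ _); rewrite subKn.
case: (leqP k n) => Hkn; last by rewrite bin_small.
rewrite -bin_sub //; have := chain (uphalf n - (n - k)).
rewrite subKn; last lia.
apply; lia.
Qed.

Lemma diff0 (s t : seq bool) : size s = size t ->
  (count id [seq p.1 != p.2 | p <- zip s t] == 0) = (s == t).
Proof.
elim: s t => [|c s IH] [|d t] //= [] st.
rewrite eqseq_cons -(IH _ st).
by case: c; case: d.
Qed.

Lemma hadj_cons (c d : bool) (s t : seq bool) :
  hadj (c :: s) (d :: t) = if c == d then hadj s t else s == t.
Proof.
have K : (size s == size t) && (count id [seq p.1 != p.2 | p <- zip s t] == 0) = (s == t).
  case E: (size s == size t); first by rewrite diff0 //; apply/eqP.
  by rewrite /=; apply/esym/negbTE; apply: contraFN E => /eqP ->.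
rewrite /hadj /= eqSS; case: c; case: d => //=; rewrite ?add0n ?add1n ?eqSS //.
Qed.

Lemma hadj_weight (s t : seq bool) : hadj s t ->
  (weight t == (weight s).+1) || (weight s == (weight t).+1).
Proof.
elim: s t => [|c s IH] [|d t] //.
rewrite hadj_cons; case: eqVneq => [->|ne].
  by move/IH; rewrite /weight /=; case: d => //=; rewrite !eqSS.
by move/eqP ->; rewrite /weight /=; case: c ne; case: d => //= _; rewrite eqxx ?orbT.
Qed.

Lemma size_hadj (s t : seq bool) : hadj s t -> size s = size t.
Proof. by case/andP => /eqP. Qed.

Lemma sum_bound m' (a b : bool) k (a' b' : bool) k' :
  (forall i, AddP a (b + k) i + AddP a' (b' + k') i <=
             SubP a k i + SubP a' k' i + RHSP a a' (b + k) (b' + k') i) ->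
  wsum m' (AddP a (b + k)) + wsum m' (AddP a' (b' + k')) <=
  wsum m' (SubP a k) + wsum m' (SubP a' k') + 3 * 2 ^ m'.+1
  + 'C(m', uphalf m') + 'C(m'.+1, uphalf m'.+1).
Proof.
move=> H.
have L : wsum m' (AddP a (b + k)) + wsum m' (AddP a' (b' + k')) <=
  wsum m' (SubP a k) + wsum m' (SubP a' k') + wsum m' (RHSP a a' (b + k) (b' + k')).
  by rewrite -!wsumD; apply: wsum_le.
set E := Eb (b + k) (b' + k'); set J := if a && a' then E.-1 else E.
have R : wsum m' (RHSP a a' (b + k) (b' + k')) = 6 * 2 ^ m' + 'C(m'.+1, E) + 'C(m', J).
  rewrite /RHSP -/E -/J !wsumD wsum_const !wsum_bin.
  rewrite -['C(m'.+1, E)]wsum_bin wsumS wsum_bin; lia.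
have B1 := bin_central m'.+1 E; have B2 := bin_central m' J.
rewrite expnS; lia.
Qed.


Lemma strQ_ge m u v : u \in allbits m -> v \in allbits m -> hadj u v ->
  pos m u + pos m v <= strQ m.
Proof.
move=> ua va uv; rewrite -(fn_pos ua) -(fn_pos va) /strQ.
apply: (@leq_trans (\max_(v <- allbits m | hadj u v) (fn m u + fn m v))).
  exact: (leq_bigmax_seq v va uv).
exact: (leq_bigmax_seq u ua).
Qed.

Lemma main_bound m' (a b a' b' : bool) z z' :
  z \in allbits m' -> z' \in allbits m' ->
  hadj [:: false, a, b & z] [:: false, a', b' & z'] ->
  pos m'.+3 [:: false, a, b & z] + pos m'.+3 [:: false, a', b' & z'] <=
  strQ m'.+1 + 3 * 2 ^ m'.+1 + 'C(m', uphalf m') + 'C(m'.+1, uphalf m'.+1).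
Proof.
move=> za z'a H.
have Dx := decomp a b za; have Dy := decomp a' b' z'a.
rewrite [weight (b :: z)]/weight /= -/(weight z) in Dx.
rewrite [weight (b' :: z')]/weight /= -/(weight z') in Dy.
rewrite AddT_eq SubT_eq in Dx; rewrite AddT_eq SubT_eq in Dy.
have pa : phi [:: false, a, b & z] \in allbits m'.+1 by rewrite mem_allbits /= -(eqP (_ : size z == m')) // -mem_allbits.
have pa' : phi [:: false, a', b' & z'] \in allbits m'.+1 by rewrite mem_allbits /= -(eqP (_ : size z' == m')) // -mem_allbits.
suff [Hp Hs] : hadj (phi [:: false, a, b & z]) (phi [:: false, a', b' & z']) /\
  wsum m' (AddP a (b + weight z)) + wsum m' (AddP a' (b' + weight z')) <=
  wsum m' (SubP a (weight z)) + wsum m' (SubP a' (weight z')) + 3 * 2 ^ m'.+1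
  + 'C(m', uphalf m') + 'C(m'.+1, uphalf m'.+1).
  have := strQ_ge pa pa' Hp; rewrite /phi; lia.
move: H; rewrite !hadj_cons eqxx /=.
case: eqVneq => [<-|na].
  case: eqVneq => [<-|nb].
    move=> zz; split; first by rewrite eqxx.
    case/orP: (hadj_weight zz) => /eqP ->.
      by apply: sum_bound => i; apply: pw_T3.
    by apply: sum_bound => i; apply: pw_T3'.
  move/eqP => <-; have Eb : b' = ~~ b by move: nb; destruct b, b'.
  subst b'.
  split; first by destruct a, b; rewrite /= ?eqxx.
  by apply: sum_bound => i; apply: pw_T2.
rewrite eqseq_cons => /andP [/eqP <- /eqP <-].
have Ea : a' = ~~ a by move: na; destruct a, a'.
subst a'.
split; first by destruct a, b; rewrite /= ?eqxx.
by apply: sum_bound => i; apply: pw_T1.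
Qed.


Theorem theorem2p4 (n : nat) (x y : seq bool) :
  5 <= n ->
  x \in allbits n -> y \in allbits n -> hadj x y ->
  fn n x + fn n y = strQ n ->
  head true x = false -> head true y = false ->
  strQ n <= strQ (n - 2) + 3 * 2 ^ (n - 2)
            + 'C(n - 3, uphalf (n - 3)) + 'C(n - 2, uphalf (n - 2)).
Proof.
move=> n5 xa ya xy E hx hy.
rewrite -E (fn_pos xa) (fn_pos ya); clear E.
have [m' Hn] : exists m', n = m'.+3 by exists (n - 3); lia.
subst n.
have -> : m'.+3 - 2 = m'.+1 by lia.
have -> : m'.+3 - 3 = m' by lia.
move: xa ya xy hx hy; rewrite !mem_allbits.
case: x => [|c [|a [|b z]]] //= /eqP [] zs.
case: y => [|c' [|a' [|b' z']]] //= /eqP [] z's.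
move=> xy hc hc'; subst c c'.
apply: main_bound => //; by rewrite mem_allbits ?zs ?z's.
Qed.
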